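(* For all positive integers $N$, there exists an $N\times N$ real matrix $Q$ with first row $q_1$ satisfying $\|q_1\|_\infty=1$ and $\log_2(\gamma_2(Q))=\Theta(N)$, such that, for any online factorization algorithm for $Q$ in the row arrival model, there exists a time step $t$ for which the factorization value achieved by the algorithm by step $t$ (that is, $\max_{s\le t}\|\ell_s\|_2$) is at least $\sqrt{\frac12\log_2(\gamma_2(Q))}\cdot\gamma_2(Q_t)$, where $Q_t$ is the matrix of the first $t$ rows of $Q$.
   Context: For a matrix, $\|R\|_{1\to2}$ is the maximum $\ell_2$ norm of a column, $\|L\|_{2\to\infty}$ the maximum $\ell_2$ norm of a row, and $\gamma_2(A)=\min\{\|L\|_{2\to\infty}\|R\|_{1\to2}:LR=A\}$. Row arrival model: rows $q_1,q_2,\ldots\in\mathbb{R}^N$ arrive one at a time. The algorithm chooses an initial (possibly empty) matrix $R_0$ with $N$ columns; at step $t$, after receiving $q_t$, it forms $R_t$ by appending rows to $R_{t-1}$ and outputs a row vector $\ell_t$ with $\ell_tR_t=q_t$, where $\|R_t\|_{1\to2}\le1$ at every step. *)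

(* Defs.v *)
From HB Require Import structures.
From mathcomp Require Import all_boot all_order all_algebra.
From mathcomp Require Import all_classical all_reals all_analysis.
Set Implicit Arguments. Unset Strict Implicit. Unset Printing Implicit Defensive.
Import Order.TTheory GRing.Theory Num.Theory.
Local Open Scope ring_scope.
Local Open Scope classical_set_scope.

Definition norm_2_inf (R : realType) (m k : nat) (L : 'M[R]_(m, k)) : R :=
  \big[Num.max/0]_(i < m) Num.sqrt (\sum_(j < k) L i j ^+ 2).

Definition norm_1_2 (R : realType) (k n : nat) (M : 'M[R]_(k, n)) : R :=
  \big[Num.max/0]_(j < n) Num.sqrt (\sum_(i < k) M i j ^+ 2).

(* gamma_2(A) = min { ||L||_{2->oo} ||M||_{1->2} : L M = A } (inner dim arbitrary);
   written as an infimum (it is attained). *)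
Definition gamma2 (R : realType) (m n : nat) (A : 'M[R]_(m, n)) : R :=
  inf [set x : R | exists (k : nat) (L : 'M[R]_(m, k)) (M : 'M[R]_(k, n)),
                     L *m M = A /\ x = norm_2_inf L * norm_1_2 M].

Definition log2 (R : realType) (x : R) : R := ln x / ln 2.

Definition norm_inf_row (R : realType) (n : nat) (v : 'rV[R]_n) : R :=
  \big[Num.max/0]_(j < n) `|v ord0 j|.

Definition norm2_seq (R : realType) (l : seq R) : R :=
  Num.sqrt (\sum_(x <- l) x ^+ 2).

(* A matrix given as the (finite) sequence of its rows: l * Rs and ||Rs||_{1->2} *)
Definition comb_rows (R : realType) (n : nat) (l : seq R) (Rs : seq 'rV[R]_n)
  : 'rV[R]_n := \sum_(i < size Rs) l`_i *: Rs`_i.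

Definition colnorm_rows (R : realType) (n : nat) (Rs : seq 'rV[R]_n) : R :=
  \big[Num.max/0]_(j < n) Num.sqrt (\sum_(r <- Rs) r ord0 j ^+ 2).

Definition prefix_rows (R : realType) (m n : nat) (Q : 'M[R]_(m.+1, n)) (t : nat)
  : 'M[R]_(t, n) := \matrix_(i < t, j < n) Q (inord i) j.

Definition history (R : realType) (m n : nat) (Q : 'M[R]_(m.+1, n)) (t : nat)
  : seq 'rV[R]_n := [seq row (inord i) Q | i <- iota 0 t].

(* A deterministic online factorization algorithm in the row arrival model
   on R^n: an initial (possibly empty) matrix R_0 (list of rows), and a step
   function which, having received q_1..q_t (its whole history), outputs the
   rows to append to R_{t-1} and the coefficient row l_t. *)
Record online_alg (R : realType) (n : nat) := OnlineAlg {
  alg_init : seq 'rV[R]_n;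
  alg_step : seq 'rV[R]_n -> seq 'rV[R]_n * seq R }.

Section Run.
Variables (R : realType) (m n : nat) (Q : 'M[R]_(m.+1, n)) (A : online_alg R n).

Definition alg_R (t : nat) : seq 'rV[R]_n :=
  alg_init A ++ flatten [seq (alg_step A (history Q s)).1 | s <- iota 1 t].

Definition alg_l (t : nat) : seq R := (alg_step A (history Q t)).2.

Definition valid_for : Prop :=
  (forall t, (t <= m.+1)%N -> colnorm_rows (alg_R t) <= 1) /\
  (forall t, (1 <= t <= m.+1)%N ->
     size (alg_l t) = size (alg_R t) /\
     comb_rows (alg_l t) (alg_R t) = row (inord t.-1) Q).

Definition value_by (t : nat) : R :=
  \big[Num.max/0]_(s <- iota 1 t) norm2_seq (alg_l s).
End Run.

(* Main.v *)
Require Import Defs.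
From HB Require Import structures.
From mathcomp Require Import all_boot all_order all_algebra.
From mathcomp Require Import all_classical all_reals all_analysis.
From mathcomp Require Import ring lra zify.
Import Order.TTheory GRing.Theory Num.Theory.
Local Open Scope ring_scope.

Section Had.
Variable R : realType.

Fixpoint Hd (p i j : nat) : R :=
  if p is p'.+1 then (if odd i && odd j then -1 else 1) * Hd p' i./2 j./2 else 1.

Lemma Hd_sq p i j : Hd p i j ^+ 2 = 1.
Proof.
elim: p i j => [|p IH] i j //=; first by rewrite expr1n.
by rewrite exprMn IH mulr1; case: ifP => _; rewrite ?sqrrN expr1n.
Qed.

Lemma Hd_0l p j : Hd p 0 j = 1.
Proof. by elim: p j => [|p IH] j //=; rewrite IH mulr1. Qed.

Lemma Hd_0r p j : Hd p j 0 = 1.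
Proof. by elim: p j => [|p IH] j //=; rewrite IH andbF mulr1. Qed.

Lemma sum_double (f : nat -> R) m :
  \sum_(0 <= i < m.*2) f i = \sum_(0 <= i < m) (f i.*2 + f i.*2.+1).
Proof.
elim: m => [|m IH]; first by rewrite !big_geq.
by rewrite doubleS !big_nat_recr //= IH addrA.
Qed.

Lemma Hd_orth p j j' : (j < 2 ^ p)%N -> (j' < 2 ^ p)%N ->
  \sum_(0 <= i < 2 ^ p) Hd p i j * Hd p i j' = if j == j' then (2 ^ p)%:R else 0.
Proof.
elim: p j j' => [|p IH] j j'.
  rewrite expn0 !ltnS !leqn0 => /eqP -> /eqP ->.
  by rewrite big_nat1 /= mulr1.
rewrite expnS mul2n -!ltn_half_double => hj hj'.
rewrite sum_double.
have E : forall i, Hd p.+1 i.*2 j * Hd p.+1 i.*2 j' + Hd p.+1 i.*2.+1 j * Hd p.+1 i.*2.+1 j'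
   = (1 + (if odd j then -1 else 1) * (if odd j' then -1 else 1)) * (Hd p i j./2 * Hd p i j'./2).
  move=> i; rewrite /= odd_double /= uphalf_double doubleK.
  case: (odd j); case: (odd j'); ring.
rewrite (eq_bigr _ (fun i _ => E i)) -mulr_sumr IH //.
case: (eqVneq j j') => [<-|neq].
  rewrite eqxx; case: (odd j); rewrite -mul2n natrM; ring.
case: (eqVneq j./2 j'./2) => [eh|nh]; last by rewrite mulr0.
have : odd j != odd j'.
  apply/negP => /eqP eo; move/negP: neq; apply.
  by rewrite -(odd_double_half j) -(odd_double_half j') eh eo.
by case: (odd j); case: (odd j') => //= _; ring.
Qed.


Lemma CS (I : Type) (r : seq I) (a b : I -> R) :
  (\sum_(i <- r) a i * b i) ^+ 2 <=
  (\sum_(i <- r) a i ^+ 2) * (\sum_(i <- r) b i ^+ 2).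
Proof.
have key : forall x : R, 0 <= x ^+ 2 * (\sum_(i <- r) a i ^+ 2)
     - 2 * x * (\sum_(i <- r) a i * b i) + \sum_(i <- r) b i ^+ 2.
  move=> x.
  have -> : x ^+ 2 * (\sum_(i <- r) a i ^+ 2)
     - 2 * x * (\sum_(i <- r) a i * b i) + \sum_(i <- r) b i ^+ 2
     = \sum_(i <- r) (x * a i - b i) ^+ 2.
    have -> : \sum_(i <- r) (x * a i - b i) ^+ 2 =
       \sum_(i <- r) (x ^+ 2 * a i ^+ 2 + (- (2 * x)) * (a i * b i) + b i ^+ 2).
      by apply: eq_bigr => i _; ring.
    by rewrite !big_split /= -!mulr_sumr; ring.
  by apply: sumr_ge0 => i _; rewrite sqr_ge0.
move: key.
set A := \sum_(i <- r) a i ^+ 2; set B := \sum_(i <- r) b i ^+ 2;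
set S := \sum_(i <- r) a i * b i => key.
have A0 : 0 <= A by apply: sumr_ge0 => i _; rewrite sqr_ge0.
have B0 : 0 <= B by apply: sumr_ge0 => i _; rewrite sqr_ge0.
case: (eqVneq A 0) => [A00|An0].
  case: (eqVneq S 0) => [->|Sn0]; first by rewrite expr0n /= A00 mul0r.
  have := key ((B + 1) / (2 * S)); rewrite A00 mulr0 sub0r.
  have -> : 2 * ((B + 1) / (2 * S)) * S = B + 1.
    by field.
  lra.
have Ap : 0 < A by rewrite lt_def An0 A0.
have := key (S / A).
have -> : (S / A) ^+ 2 * A - 2 * (S / A) * S + B = (A * B - S ^+ 2) / A by field.
rewrite pmulr_lge0 ?invr_gt0 //; lra.
Qed.

Lemma bigmax0_ge0 (I : Type) (r : seq I) (F : I -> R) : 0 <= \big[Num.max/0]_(i <- r) F i.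
Proof. exact: bigmax_ge_id. Qed.

Lemma norm_2_inf_ge0 m k (L : 'M[R]_(m, k)) : 0 <= norm_2_inf L.
Proof. exact: bigmax0_ge0. Qed.
Lemma norm_1_2_ge0 m k (L : 'M[R]_(m, k)) : 0 <= norm_1_2 L.
Proof. exact: bigmax0_ge0. Qed.

Lemma entry_le m k n (L : 'M[R]_(m, k)) (M : 'M[R]_(k, n)) i j :
  `|(L *m M) i j| <= norm_2_inf L * norm_1_2 M.
Proof.
rewrite mxE.
have CSi := @CS _ (index_enum 'I_k) (fun l => L i l) (fun l => M l j).
rewrite -sqrtr_sqr; apply: le_trans (ler_wsqrtr CSi) _.
rewrite sqrtrM ?sumr_ge0 // => [|l _]; last by rewrite sqr_ge0.
apply: ler_pM; rewrite ?sqrtr_ge0 //.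
  by rewrite /norm_2_inf; apply: (le_bigmax _ (fun i => Num.sqrt (\sum_(j < k) L i j ^+ 2)) i).
by rewrite /norm_1_2; apply: (le_bigmax _ (fun j => Num.sqrt (\sum_(i < k) M i j ^+ 2)) j).
Qed.

Lemma gamma2_lb m n (A : 'M[R]_(m, n)) x :
  (forall k (L : 'M[R]_(m, k)) (M : 'M[R]_(k, n)), L *m M = A ->
      x <= norm_2_inf L * norm_1_2 M) -> x <= gamma2 A.
Proof.
move=> H; rewrite /gamma2; apply: lb_le_inf.
  exists (norm_2_inf A * norm_1_2 (1%:M : 'M[R]_n)).
  by exists n, A, 1%:M; rewrite mulmx1.
by move=> y [k [L [M [LM ->]]]]; apply: H.
Qed.

Lemma gamma2_ge0 m n (A : 'M[R]_(m, n)) : 0 <= gamma2 A.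
Proof.
apply: gamma2_lb => k L M _; apply: mulr_ge0; [exact: norm_2_inf_ge0|exact: norm_1_2_ge0].
Qed.

Lemma gamma2_ge_entry m n (A : 'M[R]_(m, n)) i j : `|A i j| <= gamma2 A.
Proof. by apply: gamma2_lb => k L M <-; apply: entry_le. Qed.

Lemma gamma2_ub m n (A : 'M[R]_(m, n)) k (L : 'M[R]_(m, k)) (M : 'M[R]_(k, n)) :
  L *m M = A -> gamma2 A <= norm_2_inf L * norm_1_2 M.
Proof.
move=> LM; rewrite /gamma2; apply: ge_inf; last by exists k, L, M.
exists 0 => y [k' [L' [M' [_ ->]]]].
apply: mulr_ge0; [exact: norm_2_inf_ge0|exact: norm_1_2_ge0].
Qed.



Definition pp n := trunc_log 2 n.+1.
Definition KK n := (2 ^ pp n)%N.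

Lemma KK_le n : (KK n <= n.+1)%N.
Proof. exact: trunc_logP. Qed.
Lemma KK_gt n : (n.+1 < (KK n).*2)%N.
Proof. by rewrite /KK -mul2n -expnS; apply: trunc_log_ltn. Qed.
Lemma KK_pos n : (0 < KK n)%N.
Proof. by rewrite expn_gt0. Qed.

Definition Qm n : 'M[R]_(n.+1) :=
  \matrix_(i, j) if ((i < KK n) && (j < KK n))%N then 2%:R ^+ i * Hd (pp n) i j else 0.

Lemma first_row n : norm_inf_row (row ord0 (Qm n)) = 1.
Proof.
rewrite /norm_inf_row; apply: le_anti; apply/andP; split.
  apply: bigmax_le => // j _; rewrite !mxE /= KK_pos /=.
  by case: ifP => _; rewrite ?normr0 // expr0 mul1r Hd_0l normr1.
apply: le_trans (le_bigmax _ _ ord0); rewrite !mxE /= KK_pos /=.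
by rewrite expr0 mul1r Hd_0l normr1.
Qed.

Lemma geom u : 3%:R * \sum_(0 <= i < u) (4%:R : R) ^+ i + 1 = 4%:R ^+ u.
Proof.
elim: u => [|u IH]; first by rewrite big_geq // mulr0 add0r expr0.
rewrite big_nat_recr //= exprS -IH; ring.
Qed.

Lemma sq4 k : ((2%:R : R) ^+ k) ^+ 2 = 4%:R ^+ k.
Proof. by rewrite exprAC expr2 -natrM. Qed.

Lemma sq_le (x y : R) : 0 <= x -> x <= y -> x ^+ 2 <= y ^+ 2.
Proof. by move=> x0 xy; rewrite !expr2; apply: ler_pM. Qed.

Lemma prefix_gamma n t : (1 <= t <= n.+1)%N ->
  gamma2 (prefix_rows (Qm n) t) ^+ 2 <= 4%:R ^+ (minn t (KK n)).-1 * (4%:R / 3%:R).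
Proof.
case/andP => t1 tn.
set K := KK n; set u := minn t K; set a : R := 2%:R ^+ u.-1.
have u1 : (1 <= u)%N by rewrite leq_min t1 KK_pos.
have a0 : 0 < a by rewrite exprn_gt0.
pose M : 'M[R]_(t, n.+1) := \matrix_(i, j) (prefix_rows (Qm n) t i j / a).
have LM : (a%:M : 'M[R]_t) *m M = prefix_rows (Qm n) t.
  apply/matrixP => i j; rewrite mul_scalar_mx !mxE mulrC divfK //.
  by rewrite gt_eqF.
have hL : norm_2_inf (a%:M : 'M[R]_t) <= a.
  apply: bigmax_le; first exact: ltW.
  move=> i _; rewrite (bigD1 i) //= big1 => [|j /negbTE ji].
    by rewrite !mxE eqxx mulr1n addr0 sqrtr_sqr ger0_norm // ltW.
  by rewrite !mxE eq_sym ji mulr0n expr0n.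
have hM : norm_1_2 M <= Num.sqrt (4%:R / 3%:R).
  apply: bigmax_le; first exact: sqrtr_ge0.
  move=> j _; apply: ler_wsqrtr.
  pose f (i : nat) : R := if (i < K)%N then 4%:R ^+ i else 0.
  apply: (@le_trans _ _ (\sum_(i < t) f i / a ^+ 2)).
    apply: ler_sum => i _; rewrite !mxE inordK; last by apply: leq_trans (ltn_ord i) tn.
    rewrite expr_div_n; apply: ler_wpM2r; first by rewrite invr_ge0 sqr_ge0.
    rewrite /f /K; case: (i < KK n)%N; case: (j < KK n)%N => /=;
      rewrite ?expr0n ?exprn_ge0 //= exprMn sq4 Hd_sq mulr1 //.
  rewrite -mulr_suml -(big_mkord xpredT f) (big_cat_nat (leq0n u) (geq_minl t K)) /=.
  rewrite [X in _ + X]big1_seq ?addr0; last first.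
    move=> i /andP [_]; rewrite mem_index_iota => /andP [ui it]; rewrite /f ifF //.
    apply/negbTE; rewrite -leqNgt; move: ui; rewrite /u geq_min => /orP [ti|//].
    by move: (leq_trans it ti); rewrite ltnn.
  rewrite (eq_big_nat _ _ (F2 := fun i => 4%:R ^+ i)); last first.
    by move=> i /andP [_ iu]; rewrite /f ifT //; apply: leq_trans iu (geq_minr _ _).
  rewrite /a sq4.
  have g := geom u.
  have e : (4%:R : R) ^+ u = 4%:R * 4%:R ^+ u.-1 by rewrite -{1}(prednK u1) exprS.
  have p0 : 0 < (4%:R : R) ^+ u.-1 by rewrite exprn_gt0.
  suff hh : forall X Y : R, 0 < Y -> 3%:R * X + 1 = 4%:R * Y -> X / Y <= 4%:R / 3%:R.
    by apply: hh => //; rewrite geom e.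
  move=> X Y Y0 h; rewrite -(ler_pM2r Y0) divfK ?gt_eqF //; lra.
have hg := @gamma2_ub _ _ _ _ _ _ LM.
have hg2 : gamma2 (prefix_rows (Qm n) t) <= a * Num.sqrt (4%:R / 3%:R).
  apply: le_trans hg _; apply: ler_pM => //; [exact: norm_2_inf_ge0|exact: norm_1_2_ge0].
have h2 := sq_le _ _ (gamma2_ge0 _ _ _) hg2.
apply: (le_trans h2).
by rewrite exprMn sqr_sqrtr ?divr_ge0 // /a sq4.
Qed.




Lemma prefix_full n : prefix_rows (Qm n) n.+1 = Qm n.
Proof. by apply/matrixP => i j; rewrite mxE inord_val. Qed.

Lemma gammaQ_ub n : gamma2 (Qm n) ^+ 2 <= 4%:R ^+ (KK n).-1 * (4%:R / 3%:R).
Proof.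
have := prefix_gamma n n.+1; rewrite prefix_full (minn_idPr (KK_le n)); apply.
by rewrite ltn0Sn leqnn.
Qed.

Lemma gammaQ_lb n : 2%:R ^+ (KK n).-1 <= gamma2 (Qm n).
Proof.
have hK : ((KK n).-1 < n.+1)%N by apply: leq_trans (KK_le n); rewrite prednK ?KK_pos.
apply: le_trans (gamma2_ge_entry _ _ (Qm n) (inord (KK n).-1) ord0).
rewrite !mxE inordK // prednK ?KK_pos //= leqnn /= Hd_0r mulr1 ger0_norm //.
Qed.

Definition gQ n := gamma2 (Qm n).

Lemma gQ_pos n : 0 < gQ n.
Proof. apply: lt_le_trans (gammaQ_lb n); exact: exprn_gt0. Qed.

Lemma ln2_pos : 0 < ln (2%:R : R).
Proof. by apply: ln_gt0; rewrite ltr1n. Qed.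

Lemma log2_lb n : ((KK n).-1)%:R <= log2 (gQ n).
Proof.
rewrite /log2 ler_pdivlMr ?ln2_pos //.
have h : ln ((2%:R : R) ^+ (KK n).-1) <= ln (gQ n).
  rewrite ler_ln ?gammaQ_lb //; rewrite posrE ?gQ_pos //; exact: exprn_gt0.
by rewrite mulr_natl -lnXn // ltr0n.
Qed.

Lemma log2_ub n : log2 (gQ n) <= (KK n)%:R.
Proof.
rewrite /log2 ler_pdivrMr ?ln2_pos //.
have hg : gQ n <= 2%:R ^+ KK n.
  have h1 := gammaQ_ub n.
  have h2 : (4%:R : R) ^+ (KK n).-1 * (4%:R / 3%:R) <= (2%:R ^+ KK n) ^+ 2.
    rewrite sq4 -{2}(prednK (KK_pos n)) exprS mulrC ler_pM2r ?exprn_gt0 //.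
    lra.
  have h3 := le_trans h1 h2.
  have p2 : 0 < (2%:R : R) ^+ KK n by exact: exprn_gt0.
  have g0 := gQ_pos n.
  move: h3 p2 g0; rewrite /gQ; generalize (gamma2 (Qm n)) ((2%:R : R) ^+ KK n) => x y.
  move=> h p g; rewrite -(@ler_pXn2r _ 2) // ?nnegrE ?ltW //.
have h : ln (gQ n) <= ln ((2%:R : R) ^+ KK n).
  rewrite ler_ln // posrE ?gQ_pos //; exact: exprn_gt0.
by move: h; rewrite lnXn ?ltr0n // mulr_natl.
Qed.



Definition hv n (s : nat) : 'rV[R]_n.+1 :=
  \row_j (if (j < KK n)%N then Hd (pp n) s j else 0).

Definition dot {N} (u v : 'rV[R]_N) : R := \sum_j u ord0 j * v ord0 j.

Lemma Hd_orth_ord p (j j' : nat) : (j < 2 ^ p)%N -> (j' < 2 ^ p)%N ->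
  \sum_(s < 2 ^ p) Hd p s j * Hd p s j' = if j == j' then (2 ^ p)%:R else 0.
Proof.
move=> hj hj'; rewrite -(big_mkord xpredT (fun s => Hd p s j * Hd p s j')).
exact: Hd_orth.
Qed.

Lemma bessel_row n (r : 'rV[R]_n.+1) :
  \sum_(s < KK n) dot r (hv n s) ^+ 2
  = (KK n)%:R * \sum_(j < n.+1 | (j < KK n)%N) r ord0 j ^+ 2.
Proof.
have E : forall s : 'I_(KK n), dot r (hv n s)
    = \sum_(j < n.+1 | (j < KK n)%N) r ord0 j * Hd (pp n) s j.
  move=> s; rewrite /dot [RHS]big_mkcond; apply: eq_bigr => j _; unfold hv; rewrite mxE.
  by case: ifP => _ //; rewrite mulr0.
have E2 : forall s : 'I_(KK n), dot r (hv n s) ^+ 2 =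
   \sum_(j < n.+1 | (j < KK n)%N) \sum_(j' < n.+1 | (j' < KK n)%N)
       (r ord0 j * r ord0 j') * (Hd (pp n) s j * Hd (pp n) s j').
  move=> s; rewrite E expr2 big_distrl /=; apply: eq_bigr => j _.
  rewrite big_distrr /=; apply: eq_bigr => j' _; ring.
rewrite (eq_bigr _ (fun s _ => E2 s)) exchange_big /=.
rewrite mulr_sumr; apply: eq_bigr => j Pj.
rewrite exchange_big /= (bigD1 j) //= [X in _ + X]big1; last first.
  move=> j' /andP [Pj' neq].
  rewrite -mulr_sumr Hd_orth_ord //.
  have -> : (nat_of_ord j == nat_of_ord j') = false by apply/negbTE; rewrite eq_sym.
  by rewrite mulr0.
rewrite addr0 -mulr_sumr Hd_orth_ord // eqxx; ring.
Qed.

Lemma sum_ind N K (c : R) : (K <= N)%N ->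
  \sum_(j < N) (if (j < K)%N then c else 0) = c *+ K.
Proof.
move=> KN; rewrite -big_mkcond /=.
rewrite -(big_ord_widen N (fun _ => c) KN) sumr_const card_ord //.
Qed.

Lemma dot_comb N (l : seq R) (Rs : seq 'rV[R]_N) v :
  dot (comb_rows l Rs) v = \sum_(i < size Rs) l`_i * dot Rs`_i v.
Proof.
rewrite /comb_rows /dot.
under eq_bigr => j _ do rewrite summxE mulr_suml.
rewrite exchange_big /=; apply: eq_bigr => i _.
rewrite mulr_sumr; apply: eq_bigr => j _; rewrite mxE; ring.
Qed.

Lemma dot_row n (s : nat) : (s < KK n)%N ->
  dot (row (inord s) (Qm n)) (hv n s) = 2%:R ^+ s * (KK n)%:R.
Proof.
move=> sK; have sN : (s < n.+1)%N by apply: leq_trans sK (KK_le n).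
rewrite /dot (eq_bigr (fun j : 'I_n.+1 => if (j < KK n)%N then 2%:R ^+ s else 0)).
  by rewrite sum_ind ?KK_le // mulr_natr.
move=> j _; rewrite !mxE inordK // sK /=.
case: ifP => _; last by rewrite mul0r.
by rewrite -mulrA -expr2 Hd_sq mulr1.
Qed.



Lemma alg_R_prefix m N (Q : 'M[R]_(m.+1, N)) (A : online_alg R N) t T :
  (t <= T)%N -> exists rest, alg_R Q A T = alg_R Q A t ++ rest.
Proof.
move=> tT; rewrite /alg_R -(subnKC tT) iotaD map_cat flatten_cat catA.
by eexists.
Qed.

Lemma step_ineq n (A : online_alg R n.+1) (s : nat) :
  valid_for (Qm n) A -> (s < KK n)%N ->
  (2%:R ^+ s * (KK n)%:R) ^+ 2 <=
  norm2_seq (alg_l (Qm n) A s.+1) ^+ 2 *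
  \sum_(r <- alg_R (Qm n) A n.+1) dot r (hv n s) ^+ 2.
Proof.
move=> [_ Hc] sK.
have sN : (s < n.+1)%N by apply: leq_trans sK (KK_le n).
have [hsz hcomb] := Hc s.+1 sN.
rewrite /= in hcomb.
rewrite -(dot_row _ _ sK) -hcomb dot_comb.
set l := alg_l (Qm n) A s.+1; set Rs := alg_R (Qm n) A s.+1.
apply: le_trans (@CS _ (index_enum 'I_(size Rs)) (fun i => l`_i)
                   (fun i => dot Rs`_i (hv n s))) _.
apply: ler_pM.
- by apply: sumr_ge0 => i _; rewrite sqr_ge0.
- by apply: sumr_ge0 => i _; rewrite sqr_ge0.
- rewrite /norm2_seq sqr_sqrtr; last by apply: sumr_ge0 => i _; rewrite sqr_ge0.
  by rewrite (big_nth 0) big_mkord hsz.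
- have [rest ->] := alg_R_prefix _ _ (Qm n) A _ _ sN.
  rewrite big_cat /= -/Rs (big_nth (0 : 'rV[R]_n.+1)) big_mkord lerDl.
  by apply: sumr_ge0 => i _; rewrite sqr_ge0.
Qed.

Lemma value_ge m N (Q : 'M[R]_(m.+1, N)) (A : online_alg R N) t : (1 <= t)%N ->
  norm2_seq (alg_l Q A t) <= value_by Q A t.
Proof.
move=> t1; rewrite /value_by.
apply: (le_bigmax_seq _ t) => //.
by rewrite mem_iota t1 add1n ltnSn.
Qed.



Lemma online n (A : online_alg R n.+1) : valid_for (Qm n) A ->
  exists t : nat, (1 <= t <= n.+1)%N /\
    Num.sqrt (log2 (gamma2 (Qm n)) / 2) * gamma2 (prefix_rows (Qm n) t)
      <= value_by (Qm n) A t.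
Proof.
move=> V.
case: (pselect (exists t : nat, (1 <= t <= n.+1)%N /\
    Num.sqrt (log2 (gamma2 (Qm n)) / 2) * gamma2 (prefix_rows (Qm n) t)
      <= value_by (Qm n) A t)) => // Hno; exfalso.
set K := KK n.
have K0 : (0 < K)%N := KK_pos n.
have Kr0 : 0 < (K%:R : R) by rewrite ltr0n.
have lg0 : 0 <= log2 (gamma2 (Qm n)).
  by apply: le_trans (log2_lb n); rewrite ler0n.
have lgK : log2 (gamma2 (Qm n)) <= K%:R := log2_ub n.
set Rf := alg_R (Qm n) A n.+1.
have Hx : forall s : 'I_K, K%:R < \sum_(r <- Rf) dot r (hv n s) ^+ 2.
  move=> s.
  have sK : (s < K)%N := ltn_ord s.
  have sN : (0 < s.+1 <= n.+1)%N by rewrite ltn0Sn; apply: leq_trans sK (KK_le n).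
  have Hnot : value_by (Qm n) A s.+1 <
      Num.sqrt (log2 (gamma2 (Qm n)) / 2) * gamma2 (prefix_rows (Qm n) s.+1).
    by rewrite ltNge; apply/negP => h; apply: Hno; exists s.+1; split.
  have hpg := prefix_gamma n s.+1 sN.
  rewrite (minn_idPl sK) /= in hpg.
  have hvb := value_ge _ _ (Qm n) A _ (ltn0Sn s).
  have hst := step_ineq _ A _ V sK.
  rewrite exprMn sq4 in hst.
  move: Hnot hpg hvb hst.
  set N2 := norm2_seq _; set x := \sum_(r <- Rf) _;
  set L := log2 (gamma2 (Qm n)); set G := gamma2 (prefix_rows (Qm n) s.+1);
  set W := value_by _ _ _; set F := (4%:R : R) ^+ s; rewrite -/K.
  move=> Hnot hpg hvb hst.
  set q := Num.sqrt (L / 2) in Hnot.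
  have q0 : 0 <= q := sqrtr_ge0 _.
  have hq : q ^+ 2 = L / 2 by rewrite sqr_sqrtr // divr_ge0.
  have G0 : 0 <= G := gamma2_ge0 _ _ _.
  have N20 : 0 <= N2 := sqrtr_ge0 _.
  have F0 : 0 < F by rewrite exprn_gt0.
  have x0 : 0 <= x by apply: sumr_ge0 => r _; rewrite sqr_ge0.
  have h1 : N2 ^+ 2 < (q * G) ^+ 2.
    rewrite !expr2; apply: ltr_pM => //; apply: le_lt_trans hvb Hnot.
  have h2 : (q * G) ^+ 2 <= K%:R * F.
    rewrite exprMn hq.
    have h3 : L / 2 * G ^+ 2 <= K%:R / 2 * (F * (4%:R / 3%:R)).
      apply: ler_pM => //; first by rewrite divr_ge0.
        by rewrite sqr_ge0.
      by rewrite ler_pM2r.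
    apply: le_trans h3 _.
    have := mulr_ge0 (ltW Kr0) (ltW F0); lra.
  have h4 : N2 ^+ 2 < K%:R * F := lt_le_trans h1 h2.
  rewrite ltNge; apply/negP => hx.
  have h5 : N2 ^+ 2 * x <= N2 ^+ 2 * K%:R by apply: ler_wpM2l => //; rewrite sqr_ge0.
  have h6 : N2 ^+ 2 * K%:R < K%:R * F * K%:R by rewrite ltr_pM2r.
  move: hst h5 h6; generalize (N2 ^+ 2 * x) (N2 ^+ 2 * K%:R) => a b.
  move=> hst h5 h6.
  have : F * (K%:R) ^+ 2 < F * (K%:R) ^+ 2 by apply: le_lt_trans (le_trans hst h5) _;
    rewrite expr2 mulrA (mulrC F); exact: h6.
  by rewrite ltxx.
have Hsum : \sum_(s < K) (K%:R : R) < \sum_(s < K) \sum_(r <- Rf) dot r (hv n s) ^+ 2.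
  apply: ltr_sum; last by move=> s _; exact: Hx.
  by apply/hasP; exists (Ordinal K0); rewrite ?mem_index_enum.
rewrite sumr_const card_ord exchange_big /= in Hsum.
rewrite (eq_bigr _ (fun r _ => bessel_row _ r)) -mulr_sumr exchange_big /= in Hsum.
have Hcol : forall j : 'I_n.+1, \sum_(r <- Rf) r ord0 j ^+ 2 <= 1.
  move=> j; have := (V.1 n.+1 (leqnn _)); rewrite -/Rf /colnorm_rows => hc.
  have hj := le_trans (le_bigmax _ (fun j => Num.sqrt (\sum_(r <- Rf) r ord0 j ^+ 2)) j) hc.
  have y0 : 0 <= \sum_(r <- Rf) r ord0 j ^+ 2 by apply: sumr_ge0 => r _; rewrite sqr_ge0.
  rewrite -(sqr_sqrtr y0) -(expr1n _ 2).
  by apply: sq_le => //; exact: sqrtr_ge0.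
have Hb : \sum_(j < n.+1 | (j < K)%N) \sum_(r <- Rf) r ord0 j ^+ 2 <= K%:R.
  apply: le_trans (ler_sum _ (fun j _ => Hcol j)) _.
  by rewrite big_mkcond /= sum_ind ?KK_le.
have e : (K%:R : R) *+ K = K%:R * K%:R by rewrite mulr_natr.
rewrite e in Hsum.
have h2 := ler_wpM2l (ltW Kr0) Hb.
by have := lt_le_trans Hsum h2; rewrite ltxx.
Qed.

End Had.

Theorem theorem5p1 (R : realType) :
  exists (c C : R) (n0 : nat), 0 < c /\ 0 < C /\
  exists Q : forall n : nat, 'M[R]_(n.+1),
    (forall n : nat, norm_inf_row (row ord0 (Q n)) = 1) /\
    (forall n : nat, (n0 <= n)%N ->
        c * n.+1%:R <= log2 (gamma2 (Q n)) /\ log2 (gamma2 (Q n)) <= C * n.+1%:R) /\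
    (forall (n : nat) (A : online_alg R n.+1), valid_for (Q n) A ->
        exists t : nat, (1 <= t <= n.+1)%N /\
          Num.sqrt (log2 (gamma2 (Q n)) / 2) * gamma2 (prefix_rows (Q n) t)
            <= value_by (Q n) A t).
Proof.
exists (1 / 4%:R), 1, 1%N; split; first by lra.
split; first by lra.
exists (@Qm R); split; first exact: first_row.
split; last exact: online.
move=> n n1; split.
  apply: le_trans (log2_lb R n).
  have h : (n.+1 <= 4 * (KK n).-1)%N.
    have := KK_gt n; have := KK_pos n; rewrite -mul2n -subn1.
    move: (KK n) => k; lia.
  rewrite -(ler_nat R) natrM in h; lra.
apply: le_trans (log2_ub R n) _.
by rewrite mul1r ler_nat; exact: KK_le.
Qed.
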